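(* Fix a positive integer $k$ and a permutation $\rho$. Then $\lim_{n\to\infty}\left(\operatorname{op}^*_{n,k}(\rho)\right)^{1/n}$ exists and is a real number in $[1,\infty)$.
   Context: For a permutation $\rho=\rho_1\cdots\rho_m\in\mathcal{S}_m$ and a sequence of pairwise disjoint (possibly empty) sets $B_1/B_2/\cdots/B_k$, we say it contains $\rho$ if there are indices $i_1<i_2<\cdots<i_m$ and elements $b_j\in B_{i_j}$ such that $b_1\cdots b_m$ is order-isomorphic to $\rho$ (i.e. $b_a<b_c$ iff $\rho_a<\rho_c$); otherwise it avoids $\rho$. $\operatorname{op}^*_{n,k}(\rho)$ is the number of sequences $B_1/\cdots/B_k$ of pairwise disjoint subsets of $[n]$ (blocks are allowed to be empty; order of blocks matters, order within a block does not) with $\bigcup_i B_i=[n]$ that avoid $\rho$. *)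

(* Defs.v *)
From HB Require Import structures.
From mathcomp Require Import all_boot all_order all_algebra all_fingroup.
From mathcomp Require Import all_classical all_reals all_analysis.
Set Implicit Arguments. Unset Strict Implicit. Unset Printing Implicit Defensive.

(* [n] is modelled by 'I_n = {0,..,n-1} (order-isomorphic), blocks are
   indexed by 'I_k; a sequence B_1/.../B_k is a finite function
   'I_k -> {set 'I_n}. *)

Definition is_ordered_cover (n k : nat) (B : {ffun 'I_k -> {set 'I_n}}) : bool :=
  [forall i : 'I_k, forall j : 'I_k, (i != j) ==> [disjoint B i & B j]] &&
  (\bigcup_(i : 'I_k) B i == [set: 'I_n]).

Definition contains_perm (n k m : nat) (B : {ffun 'I_k -> {set 'I_n}})
    (rho : 'S_m) : bool :=
  [exists idx : {ffun 'I_m -> 'I_k}, exists b : {ffun 'I_m -> 'I_n},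
     [forall a : 'I_m, forall c : 'I_m, (a < c)%N ==> (idx a < idx c)%N] &&
     [forall a : 'I_m, b a \in B (idx a)] &&
     [forall a : 'I_m, forall c : 'I_m,
        ((b a < b c)%N == (rho a < rho c)%N)]].

Definition avoids_perm (n k m : nat) (B : {ffun 'I_k -> {set 'I_n}})
    (rho : 'S_m) : bool := ~~ contains_perm B rho.

Definition opstar (n k m : nat) (rho : 'S_m) : nat :=
  #|[set B : {ffun 'I_k -> {set 'I_n}} | is_ordered_cover B && avoids_perm B rho]|.

(* Main.v *)
Require Import Defs.
From HB Require Import structures.
From mathcomp Require Import all_boot all_order all_algebra all_fingroup.
From mathcomp Require Import all_classical all_reals all_analysis.
Import Order.TTheory GRing.Theory Num.Theory numFieldNormedType.Exports.
Set Implicit Arguments. Unset Strict Implicit. Unset Printing Implicit Defensive.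

Fixpoint words (k j : nat) : seq (seq nat) :=
  if j is j'.+1 then [seq c :: w | c <- iota 0 k, w <- words k j'] else [:: [::]].

Lemma mem_words k j w : (w \in words k j) = (size w == j) && all (fun c => c < k) w.
Proof.
elim: j w => [|j IH] w /=.
  by case: w.
apply/allpairsP/idP.
  case=> [[c w'] /= [hc hw ->]]; rewrite /= eqSS; move: hw; rewrite IH.
  case/andP=> -> ->; rewrite mem_iota in hc; by case/andP: hc => _ ->.
case: w => [|c w'] //=; rewrite eqSS => /and3P [h1 h2 h3].
exists (c, w') => /=; split=> //; first by rewrite mem_iota.
by rewrite IH h1 h3.
Qed.

Definition U (k m : nat) : seq (seq nat) := flatten [seq words k j | j <- iota 0 m.+1].

Lemma mem_U k m u : (u \in U k m) = (size u <= m) && all (fun c => c < k) u.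
Proof.
apply/flattenP/idP.
  case=> s /mapP [j hj ->]; rewrite mem_words => /andP [/eqP hs ->].
  by rewrite mem_iota in hj; rewrite andbT hs -ltnS; case/andP: hj.
case/andP=> hs ha; exists (words k (size u)); first by apply/mapP; exists (size u) => //; rewrite mem_iota.
by rewrite mem_words eqxx.
Qed.

Definition matchb m (rho : 'S_m) (u : seq nat) : bool :=
  (size u == m) && [forall a : 'I_m, forall c : 'I_m, (a < c) ==> (nth 0 u (rho a) < nth 0 u (rho c))].

Definition containsb k m (rho : 'S_m) (x : seq nat) : bool :=
  has (fun u => matchb rho u && subseq u x) (U k m).

Lemma containsb_cat k m (rho : 'S_m) x y : containsb k rho x -> containsb k rho (x ++ y).
Proof.
case/hasP=> u hu /andP [h1 h2]; apply/hasP; exists u => //; rewrite h1 /=.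
exact: subseq_trans h2 (prefix_subseq _ _).
Qed.

Definition Phi k m x := count (fun u => subseq u x) (U k m).
Definition free k m x c := all (fun u => subseq u (rcons x c) ==> subseq u x) (U k m).

Lemma subseq_rcons2 (u x : seq nat) c : subseq u x -> subseq (rcons u c) (rcons x c).
Proof. by move=> h; rewrite -!cats1; apply: cat_subseq => //; rewrite subseq_refl. Qed.

Lemma count_lt_strict (T : Type) (p q : pred T) (s : seq T) :
  (forall u, p u -> q u) -> count p s <= count q s.
Proof. by move=> h; elim: s => //= a s IH; apply: leq_add => //; case: (p a) (h a) => // ->. Qed.

Lemma count_strict (T : eqType) (p q : pred T) (s : seq T) :
  (forall u, p u -> q u) -> (exists2 u, u \in s & q u && ~~ p u) -> count p s < count q s.
Proof.
move=> h; elim: s => [[u]//|a s IH] [u]; rewrite inE => /orP [/eqP -> /andP [hq hp]|hu hpq] /=.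
  by rewrite (negbTE hp) hq add0n add1n ltnS count_lt_strict.
rewrite -addnS; apply: leq_add; first by case: (p a) (h a) => // ->.
by apply: IH; exists u.
Qed.

Lemma Phi_le k m x : Phi k m x <= size (U k m).
Proof. exact: count_size. Qed.

Lemma Phi_rcons k m x c : Phi k m x <= Phi k m (rcons x c).
Proof. apply: count_lt_strict => u h; exact: subseq_trans h (subseq_rcons _ _). Qed.

Lemma Phi_free k m x c : free k m x c -> Phi k m (rcons x c) = Phi k m x.
Proof.
move=> /allP hf; apply: eq_in_count => u hu /=; apply/idP/idP; last first.
  by move=> h; exact: subseq_trans h (subseq_rcons _ _).
by move: (hf u hu) => /implyP.
Qed.

Lemma Phi_nfree k m x c : ~~ free k m x c -> Phi k m x < Phi k m (rcons x c).
Proof.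
move=> /allPn [u hu hn]; apply: count_strict.
  move=> v h; exact: subseq_trans h (subseq_rcons _ _).
by exists u => //; rewrite negb_imply in hn.
Qed.

Lemma free_subseq k m x (v : seq nat) :
  all (free k m x) v -> all (fun c => c < k) v -> size v <= m -> subseq v x.
Proof.
elim/last_ind: v => [|v c IH]; first by rewrite sub0seq.
rewrite !all_rcons size_rcons => /andP [hc hv] /andP [hck hvk] hs.
have h1 : subseq v x by apply: IH => //; exact: ltnW.
have hU : rcons v c \in U k m by rewrite mem_U size_rcons hs all_rcons hck hvk.
by move/allP: hc => /(_ _ hU) /implyP; apply; apply: subseq_rcons2.
Qed.

Lemma free_count k m (rho : 'S_m) x :
  ~~ containsb k rho x -> count (free k m x) (iota 0 k) <= m.-1.
Proof.
move=> hx; rewrite leqNgt; apply/negP => hlt.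
have hm : m <= count (free k m x) (iota 0 k).
  by case: m rho hx hlt.
set s := seq.filter (free k m x) (iota 0 k).
have hss : m <= size s by rewrite size_filter.
have hsort : sorted ltn s by apply: sorted_filter; [exact: ltn_trans|exact: iota_ltn_sorted].
set v := [seq nth 0 s ((rho^-1)%g j) | j <- enum 'I_m].
have hvs : forall y, y \in v -> y \in s.
  move=> y /mapP [j _ ->]; apply: mem_nth; exact: leq_trans (ltn_ord _) hss.
have hsub : subseq v x.
  apply: (@free_subseq k m).
  - by apply/allP => y /hvs; rewrite mem_filter; case/andP.
  - by apply/allP => y /hvs; rewrite mem_filter mem_iota add0n; case/and3P.
  - by rewrite size_map size_enum_ord.
move/negP: hx; apply; apply/hasP; exists v.
  rewrite mem_U size_map size_enum_ord leqnn /=.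
  by apply/allP => y /hvs; rewrite mem_filter mem_iota add0n; case/and3P.
rewrite hsub andbT /matchb size_map size_enum_ord eqxx /=.
apply/forallP => a; apply/forallP => c; apply/implyP => hac.
have nv : forall b : 'I_m, nth 0 v (rho b) = nth 0 s b.
  move=> b; rewrite (nth_map b); last by rewrite size_enum_ord.
  by rewrite nth_ord_enum permK.
rewrite !nv; apply: (sorted_ltn_nth ltn_trans) => //; rewrite inE;
  exact: leq_trans (ltn_ord _) hss.
Qed.

Definition cnt k m (rho : 'S_m) x n :=
  count (fun y => ~~ containsb k rho (x ++ y)) (words k n).

Lemma count_allpairs_cons (p : pred (seq nat)) (s : seq nat) (W : seq (seq nat)) :
  count p [seq c :: w | c <- s, w <- W] = sumn [seq count (fun w => p (c :: w)) W | c <- s].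
Proof.
elim: s => //= a s IH; rewrite count_cat IH count_map; congr (_ + _).
Qed.

Lemma cnt_S k m (rho : 'S_m) x n :
  cnt k rho x n.+1 = sumn [seq cnt k rho (rcons x c) n | c <- iota 0 k].
Proof.
rewrite /cnt /= count_allpairs_cons; congr sumn; apply: eq_map => c.
by apply: eq_count => y; rewrite cat_rcons.
Qed.

Lemma sumn_mono (s : seq nat) (f g : nat -> nat) :
  (forall c, c \in s -> f c <= g c) -> sumn [seq f c | c <- s] <= sumn [seq g c | c <- s].
Proof.
elim: s => //= a s IH h; apply: leq_add; first by apply: h; rewrite inE eqxx.
by apply: IH => c hc; apply: h; rewrite inE hc orbT.
Qed.

Lemma sumn_if (s : seq nat) (p : pred nat) X Y :
  sumn [seq (if p c then X else Y) | c <- s] = count p s * X + count (predC p) s * Y.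
Proof.
elim: s => //= a s ->; case: (p a) => /=; rewrite ?add0n ?add1n !mulSn.
  by rewrite addnA.
by rewrite addnCA.
Qed.

From mathcomp Require Import zify.

Lemma arith_step (A k d P Q : nat) : 1 <= d -> P <= Q ->
  d * (A * P) + k * P <= (A + k) * Q * d.
Proof.
move=> hd hPQ.
have h1 := leq_mul (leq_mul (leqnn (A+k)) hPQ) (leqnn d).
have h2 : k * P <= d * (k * P) by rewrite leq_pmull.
apply: leq_trans h1; rewrite !mulnDl.
rewrite [A * P * d]mulnC [k * P * d]mulnC leq_add2l; exact: h2.
Qed.

Lemma cnt_bound k m (rho : 'S_m) n : 0 < k -> 1 < m ->
  forall x, all (fun c => c < k) x -> ~~ containsb k rho x ->
  cnt k rho x n <= (n.+1 * k) ^ (size (U k m) - Phi k m x) * (minn k m.-1) ^ n.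
Proof.
move=> hk hm.
have hd : 1 <= minn k m.-1 by rewrite leq_min hk; case: m rho hm => [|[|m']].
set d := minn k m.-1.
elim: n => [|n IH] x hxk hx.
  rewrite /cnt /= cats0 hx /= expn0 muln1; by rewrite expn_gt0 mul1n hk.
set j := size (U k m) - Phi k m x.
set A := n.+1 * k.
rewrite cnt_S.
apply: (@leq_trans (sumn [seq (if free k m x c then A ^ j * d ^ n else A ^ j.-1 * d ^ n) | c <- iota 0 k])).
  apply: sumn_mono => c hc.
  have hck : c < k by rewrite mem_iota add0n in hc; case/andP: hc.
  case hcc: (containsb k rho (rcons x c)).
    rewrite /cnt (@eq_count _ _ pred0) ?count_pred0 // => y /=.
    by rewrite (containsb_cat _ hcc).
  have IH' := IH (rcons x c); rewrite all_rcons hck hxk hcc in IH'.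
  have IH'' := IH' erefl erefl.
  case hf: (free k m x c).
    by rewrite (Phi_free hf) in IH''.
  apply: (leq_trans IH''); rewrite leq_mul2r; apply/orP; right.
  apply: leq_pexp2l; first by rewrite /A muln_gt0 hk.
  rewrite /j -subnS; apply: leq_sub2l; exact: Phi_nfree (negbT hf).
rewrite sumn_if.
have hfc : count (free k m x) (iota 0 k) <= d.
  by rewrite leq_min (free_count hx) andbT; have := count_size (free k m x) (iota 0 k); rewrite size_iota.
have hnf : count (predC (free k m x)) (iota 0 k) <= k.
  by have := count_size (predC (free k m x)) (iota 0 k); rewrite size_iota.
case hj: j => [|j'].
  have -> : count (predC (free k m x)) (iota 0 k) = 0.
    apply/eqP; rewrite -leqn0 leqNgt -has_count; apply/negP => /hasP [c _ /= hc].
    have h1 := leq_trans (Phi_nfree hc) (Phi_le k m (rcons x c)).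
    by move/eqP: hj; rewrite /j subn_eq0 leqNgt h1.
  rewrite mul0n addn0 !expn0 !mul1n expnS; exact: leq_mul.
rewrite /=.
apply: (@leq_trans (d * (A ^ j'.+1 * d ^ n) + k * (A ^ j' * d ^ n))).
  by apply: leq_add; apply: leq_mul.
have -> : n.+2 * k = A + k by rewrite /A mulSn addnC.
have hPQ : A ^ j' <= (A + k) ^ j'.
  by elim: (j') => // i IHi; rewrite !expnS; apply: leq_mul (leq_addr _ _) IHi.
have h := leq_mul (arith_step A k hd hPQ) (leqnn (d ^ n)).
rewrite -/d in h; rewrite [(A + k) ^ j'.+1]expnS [A ^ j'.+1]expnS [d ^ n.+1]expnS.
move: h; set P := A ^ j'; set Q := (A + k) ^ j'; set D := d ^ n; move=> h.
clearbody d P Q D A. lia.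
Qed.

Definition blk n k (B : {ffun 'I_k -> {set 'I_n}}) (x : 'I_n) : nat :=
  if [pick i | x \in B i] is Some i then val i else 0.

Definition wordB n k (B : {ffun 'I_k -> {set 'I_n}}) := [seq blk B x | x <- enum 'I_n].

Lemma blkP n k (B : {ffun 'I_k -> {set 'I_n}}) : is_ordered_cover B ->
  forall x (i : 'I_k), (x \in B i) = (blk B x == i).
Proof.
case/andP=> /forallP hd /eqP hu x i.
have : x \in \bigcup_(i : 'I_k) B i by rewrite hu inE.
case/bigcupP=> j _ hj.
rewrite /blk; case: pickP => [l hl|]; last by move/(_ j); rewrite hj.
apply/idP/idP.
  move=> hi; case: (eqVneq i l) => [-> //|hne].
  have := forallP (hd i) l; rewrite hne /= => /disjointFr /(_ hi).
  by rewrite hl.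
by move=> /eqP h; have -> : i = l by apply: val_inj.
Qed.

Lemma blk_lt n k (B : {ffun 'I_k -> {set 'I_n}}) x : 0 < k -> blk B x < k.
Proof. move=> hk; rewrite /blk; case: pickP => [i _|_] //; exact: ltn_ord. Qed.

Lemma wordB_words n k (B : {ffun 'I_k -> {set 'I_n}}) : 0 < k -> wordB B \in words k n.
Proof.
move=> hk; rewrite mem_words size_map size_enum_ord eqxx /=.
by apply/allP => y /mapP [x _ ->]; apply: blk_lt.
Qed.

Lemma wordB_inj n k (B B' : {ffun 'I_k -> {set 'I_n}}) :
  is_ordered_cover B -> is_ordered_cover B' -> wordB B = wordB B' -> B = B'.
Proof.
move=> hB hB' /eq_in_map he; apply/ffunP => i; apply/setP => x.
by rewrite (blkP hB) (blkP hB') he // mem_enum.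
Qed.

Lemma nth_wordB n k (B : {ffun 'I_k -> {set 'I_n}}) (x : 'I_n) : nth 0 (wordB B) x = blk B x.
Proof. by rewrite (nth_map x) ?size_enum_ord // nth_ord_enum. Qed.

Lemma subseq_pos (u w : seq nat) : subseq u w ->
  exists q : nat -> nat, (forall i j, i < j -> j < size u -> q i < q j) /\
     (forall i, i < size u -> q i < size w /\ nth 0 w (q i) = nth 0 u i).
Proof.
elim: w u => [|y w IH] u.
  by move/eqP => ->; exists id.
case: u => [|x u] /=; first by exists id.
case: eqP => [->|hne] h.
  have [q [h1 h2]] := IH _ h.
  exists (fun i => if i is i'.+1 then (q i').+1 else 0); split.
    by case=> [|i] [|j] //= hij hj; rewrite ltnS h1.
  case=> [|i] //= hi; have [h3 h4] := h2 i hi; by split.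
have [q [h1 h2]] := IH _ h.
exists (fun i => (q i).+1); split.
  by move=> i j hij hj; rewrite ltnS h1.
by move=> i hi; have [h3 h4] := h2 i hi; split.
Qed.

Lemma containsb_perm n k m (rho : 'S_m) (B : {ffun 'I_k -> {set 'I_n}}) :
  0 < k -> 0 < m -> is_ordered_cover B -> containsb k rho (wordB B) -> contains_perm B rho.
Proof.
move=> hk hm hB /hasP [u hu /andP [hmt hsub]].
move: hu; rewrite mem_U => /andP [_ huk].
case/andP: hmt => /eqP hsz /forallP hord.
have [q [hq1 hq2]] := subseq_pos hsub.
have hw : size (wordB B) = n by rewrite size_map size_enum_ord.
have hn : 0 < n by rewrite -hw; have := hq2 0; rewrite hsz => /(_ hm) [+ _]; exact: leq_ltn_trans.
pose i0 : 'I_k := Ordinal hk.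
pose x0 : 'I_n := Ordinal hn.
pose idx := [ffun a : 'I_m => insubd i0 (nth 0 u (rho a))].
pose b := [ffun a : 'I_m => insubd x0 (q (rho a))].
have hidx : forall a, val (idx a) = nth 0 u (rho a).
  move=> a; rewrite ffunE val_insubd (allP huk) //; apply: mem_nth; by rewrite hsz.
have hb : forall a, val (b a) = q (rho a).
  move=> a; rewrite ffunE val_insubd; have := hq2 (rho a); rewrite hsz hw => /(_ (ltn_ord _)) [-> _] //.
have hqm : forall i j, i < m -> j < m -> (q i < q j) = (i < j).
  move=> i j hi hj; case: (ltngtP i j) => hij.
  - by apply: hq1; rewrite // hsz.
  - by apply/negbTE; rewrite -leqNgt ltnW // hq1 // hsz.
  - by rewrite hij ltnn.
apply/existsP; exists idx; apply/existsP; exists b.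
apply/andP; split; first (apply/andP; split).
- apply/forallP => a; apply/forallP => c; apply/implyP => hac.
  by rewrite !hidx; move/forallP: (hord a) => /(_ c) /implyP /(_ hac).
- apply/forallP => a; rewrite (blkP hB) -nth_wordB hb hidx.
  by have := hq2 (rho a); rewrite hsz => /(_ (ltn_ord _)) [_ ->].
- apply/forallP => a; apply/forallP => c; by rewrite !hb hqm.
Qed.

Lemma opstar_le_cnt n k m (rho : 'S_m) : 0 < k -> 0 < m ->
  opstar n k rho <= cnt k rho [::] n.
Proof.
move=> hk hm; rewrite /opstar /cnt -size_filter cardE.
set S := [set B | _].
rewrite -(size_map (@wordB n k)).
apply: uniq_leq_size.
  rewrite map_inj_in_uniq ?enum_uniq // => B B'; rewrite !mem_enum !inE.
  case/andP=> h1 _ /andP [h2 _]; exact: wordB_inj.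
move=> y /mapP [B]; rewrite mem_enum inE => /andP [h1 h2] ->.
rewrite mem_filter cat0s wordB_words // andbT.
by apply/negP => /(containsb_perm hk hm h1); apply/negP.
Qed.

Definition psi n k d (g : {ffun 'I_n -> 'I_d}) : {ffun 'I_k -> {set 'I_n}} :=
  [ffun i : 'I_k => [set x | val (g x) == val i]].

Lemma incr_ge m (idx : 'I_m -> nat) :
  (forall a c : 'I_m, a < c -> idx a < idx c) -> forall a : 'I_m, a <= idx a.
Proof.
move=> h.
suff H : forall j (a : 'I_m), val a = j -> j <= idx a by move=> a; exact: H.
elim=> [//|j IH] a ha.
have hj : j < m by apply: ltn_trans (ltn_ord a); rewrite ha.
have := IH (Ordinal hj) erefl; have := h (Ordinal hj) a; rewrite ha /= ltnSn => /(_ isT).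
by move=> h1 h2; exact: leq_ltn_trans h2 h1.
Qed.

Lemma lower_bound n k m (rho : 'S_m) : 1 < m -> (minn k m.-1) ^ n <= opstar n k rho.
Proof.
move=> hm; set d := minn k m.-1.
have hdk : d <= k by rewrite geq_minl.
have hdm : d <= m.-1 by rewrite geq_minr.
have hinj : injective (@psi n k d).
  move=> g g' he; apply/ffunP => x; apply: val_inj.
  have hx : g x < k by exact: leq_trans (ltn_ord _) hdk.
  move/ffunP: he => /(_ (Ordinal hx)) /setP /(_ x); rewrite !ffunE !inE /= eqxx.
  by move/esym/eqP.
rewrite -{1}(card_ord d) -{1}(card_ord n) -card_ffun -(card_imset _ hinj).
rewrite /opstar; apply: subset_leq_card; apply/fintype.subsetP => B /imsetP [g _ ->].
rewrite inE; apply/andP; split.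
  apply/andP; split.
    apply/forallP => i; apply/forallP => j; apply/implyP => hij.
    rewrite -setI_eq0; apply/eqP/setP => x; rewrite !ffunE !inE.
    apply/negP => /andP [/eqP h1 /eqP h2].
    have hij' : i = j by apply: val_inj; rewrite -h1 -h2.
    by rewrite hij' eqxx in hij.
  apply/eqP/setP => x; rewrite inE; apply/bigcupP.
  have hx : g x < k by exact: leq_trans (ltn_ord _) hdk.
  by exists (Ordinal hx) => //; rewrite ffunE inE.
apply/negP => /existsP [idx /existsP [b /andP [/andP [/forallP h1 /forallP h2] _]]].
have hinc : forall a c : 'I_m, a < c -> idx a < idx c.
  by move=> a c hac; move/forallP: (h1 a) => /(_ c) /implyP /(_ hac).
have hm0 : m.-1 < m by rewrite prednK //; exact: ltnW.
have := incr_ge hinc (Ordinal hm0) => /=.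
have := h2 (Ordinal hm0); rewrite ffunE inE => /eqP <-.
move=> h; have := leq_ltn_trans h (ltn_ord _).
by rewrite ltnNge hdm.
Qed.
Lemma containsb_nil k m (rho : 'S_m) : (0 < m)%N -> containsb k rho [::] = false.
Proof.
move=> hm; apply/negbTE/hasP => [[u _ /andP [/andP [/eqP hs _] hsub]]].
move: hsub; rewrite /= => /eqP hu; move: hs; rewrite hu => h0.
by move: hm; rewrite -h0.
Qed.

Lemma upper_bound n k m (rho : 'S_m) : (0 < k)%N -> (1 < m)%N ->
  (opstar n k rho <= (n.+1 * k) ^ size (U k m) * (minn k m.-1) ^ n)%N.
Proof.
move=> hk hm.
have hm0 : (0 < m)%N by exact: ltnW.
apply: leq_trans (opstar_le_cnt n rho hk hm0) _.
apply: leq_trans (cnt_bound n hk hm _ _) _.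
- by [].
- by rewrite containsb_nil.
rewrite leq_mul2r; apply/orP; right; apply: leq_pexp2l; first by rewrite muln_gt0 hk.
exact: leq_subr.
Qed.


Local Open Scope ring_scope.
Local Open Scope classical_set_scope.
From mathcomp Require Import ring lra.

Lemma lnlin (R : realType) (P : nat) : (0 < P)%N ->
  (n%:R^-1 * ln ((n.+1 * P)%:R : R)) @[n --> \oo] --> (0 : R).
Proof.
move=> hP; apply/cvgrPdist_le => e e0.
have hP' : (1 : R) <= P%:R by rewrite ler1n.
near=> n.
have hn : 8 * P%:R / e ^+ 2 + 1 <= n%:R :> R by near: n; exact: nbhs_infty_ger.
set t : R := n%:R in hn *.
have he2 : 0 < e ^+ 2 by rewrite exprn_gt0.
have ht1 : 1 <= t.
  have : 0 <= 8 * P%:R / e ^+ 2 :> R by apply: divr_ge0; [lra|exact: ltW].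
  move=> h; lra.
have ht0 : 0 < t by lra.
have hte : 8 * P%:R <= t * e ^+ 2.
  rewrite -ler_pdivrMr //; lra.
have hx1 : (1 : R) <= (n.+1 * P)%:R by rewrite ler1n muln_gt0 hP.
have hx : (n.+1 * P)%:R = (t + 1) * P%:R :> R by rewrite natrM -addn1 natrD.
rewrite sub0r normrN ger0_norm; last first.
  by rewrite mulr_ge0 ?invr_ge0 ?ler0n // ln_ge0.
rewrite mulrC ler_pdivrMr // mulrC.
have hte0 : 0 <= t * e by rewrite mulr_ge0 // ltW.
have hexp : (t + 1) * P%:R <= expR (t * e).
  have h1 : expR (t * e) = expR (t * e / 2) ^+ 2.
    by rewrite expr2 -expRD; congr expR; field.
  have h2 := expR_ge1Dx (t * e / 2).
  rewrite h1; apply: (@le_trans _ _ ((1 + t * e / 2) ^+ 2)); last first.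
    by rewrite lerXn2r // ?nnegrE //; lra.
  have : 2 * P%:R * t <= t * (t * e ^+ 2) / 4.
    have : t * (8 * P%:R) <= t * (t * e ^+ 2) by rewrite ler_pM2l.
    lra.
  nra.
rewrite -hx in hexp.
rewrite -(expRK (t * e)) ler_ln // ?posrE ?expR_gt0 //.
by apply: lt_le_trans hx1; rewrite ltr01.
Unshelve. all: end_near.
Qed.

Lemma rootpoly (R : realType) (K P : nat) : (0 < P)%N ->
  ((((n.+1 * P) ^ K)%:R : R) `^ (n%:R^-1)) @[n --> \oo] --> (1 : R).
Proof.
move=> hP.
have e : forall n, (((n.+1 * P) ^ K)%:R : R) `^ (n%:R^-1) =
    expR (K%:R * (n%:R^-1 * ln ((n.+1 * P)%:R : R))).
  move=> n; rewrite /powR pnatr_eq0 expn_eq0 muln_eq0 (negbTE (lt0n_neq0 hP)) /=.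
  rewrite natrX lnXn ?ltr0n ?muln_gt0 ?hP //; congr expR.
  by rewrite -[ln _ *+ K]mulr_natl mulrCA.
under eq_fun do rewrite e.
have h0 : (K%:R * (n%:R^-1 * ln ((n.+1 * P)%:R : R))) @[n --> \oo] --> (K%:R * 0 : R).
  by apply: cvgMl_tmp; exact: lnlin.
have := cvg_comp _ _ h0 (@continuous_expR R (K%:R * 0)).
by rewrite mulr0 expR0.
Qed.

Lemma powR_root (R : realType) (x : R) (n : nat) : 0 <= x -> (0 < n)%N ->
  (x ^+ n) `^ (n%:R^-1) = x.
Proof.
move=> hx hn; rewrite -powR_mulrn // -powRrM mulfV ?powRr1 //.
by rewrite pnatr_eq0 -lt0n.
Qed.

Theorem theorem10 (R : realType) (k m : nat) (rho : 'S_m) :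
  (0 < k)%N -> (2 <= m)%N ->
  exists L : R,
    (((opstar n k rho)%:R : R) `^ (n%:R^-1) @[n --> \oo] --> L)
    /\ 1 <= L.
Proof.
move=> hk hm.
set d := minn k m.-1.
have hd : (1 <= d)%N by rewrite leq_min hk; case: m rho hm {d} => [|[|m']].
set K := size (U k m).
exists d%:R; split; last by rewrite ler1n.
apply: (@squeeze_cvgr _ _ _ _ (fun=> d%:R) (fun n => d%:R * ((((n.+1 * k) ^ K)%:R : R) `^ (n%:R^-1)))).
- near=> n.
  have hn : (0 < n)%N by near: n; exact: nbhs_infty_gt.
  have hi : (0 : R) <= n%:R^-1 by rewrite invr_ge0 ler0n.
  apply/andP; split.
    rewrite -{1}(@powR_root R d%:R n) ?ler0n //.
    apply: ge0_ler_powR => //; rewrite ?nnegrE ?exprn_ge0 ?ler0n //.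
    by rewrite -natrX ler_nat lower_bound.
  rewrite -(@powR_root R d%:R n) ?ler0n // mulrC -powRM ?exprn_ge0 ?ler0n //.
  apply: ge0_ler_powR => //; rewrite ?nnegrE ?mulr_ge0 ?exprn_ge0 ?ler0n //.
  by rewrite -natrX -natrM ler_nat upper_bound.
- exact: cvg_cst.
- have h0 : (d%:R * ((((n.+1 * k) ^ K)%:R : R) `^ (n%:R^-1))) @[n --> \oo] --> (d%:R * 1 : R).
    by apply: cvgMl_tmp; exact: rootpoly.
  by rewrite mulr1 in h0.
Unshelve. all: end_near.
Qed.
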